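(* Let $\mathcal{H}$ and $\mathcal{K}$ be Hilbert spaces, let $V\in\mathcal{B}(\mathcal{H})$ be an isometry, let $T\in\mathcal{B}(\mathcal{K})$ be a power bounded operator, and let $X\in\mathcal{B}(\mathcal{H},\mathcal{K})$. Then the equation $X=TZ-ZV$ has a bounded solution $Z\in\mathcal{B}(\mathcal{H},\mathcal{K})$ satisfying $Z(I-VV^* )=0$ if and only if $$\sup_{n\ge 0}\Big\|\sum_{j=0}^{n}T^jXV^{*\,j+1}\Big\|<\infty.$$
   Context: $\mathcal{B}(\mathcal{H},\mathcal{K})$ denotes the bounded linear operators from $\mathcal{H}$ to $\mathcal{K}$, and $\mathcal{B}(\mathcal{H})=\mathcal{B}(\mathcal{H},\mathcal{H})$. An operator $T$ is power bounded if $\sup_{n\ge0}\|T^n\|<\infty$. $I$ denotes the identity operator. *)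

(* Defs.v *)
From HB Require Import structures.
From mathcomp Require Import all_boot all_order all_algebra.
From mathcomp Require Import all_classical all_reals all_analysis.
From mathcomp Require Import complex.
Import Order.TTheory GRing.Theory Num.Theory.
Import numFieldNormedType.Exports.

Set Implicit Arguments.
Unset Strict Implicit.
Unset Printing Implicit Defensive.

Local Open Scope ring_scope.

(* Complex Hilbert spaces: a complete normed R[i]-module H (R : realType)
   whose norm comes from an inner product [ip], linear in the first
   argument and conjugate-linear in the second. *)
Definition is_inner_product (R : realType) (H : normedModType R[i])
    (ip : H -> H -> R[i]) : Prop :=
  [/\ forall (a : R[i]) (x y z : H), ip (a *: x + y) z = a * ip x z + ip y z,
      forall x y : H, ip x y = (ip y x)^* &
      forall x : H, ip x x = `|x| ^+ 2].

Definition bounded_op (R : realType) (H K : normedModType R[i])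
    (f : H -> K) : Prop :=
  linear f /\ continuous f.

Definition is_adjoint (R : realType) (H K : normedModType R[i])
    (ipH : H -> H -> R[i]) (ipK : K -> K -> R[i])
    (f : H -> K) (fs : K -> H) : Prop :=
  forall (x : H) (y : K), ipK (f x) y = ipH x (fs y).

Definition is_isometry (R : realType) (H : normedModType R[i]) (V : H -> H) : Prop :=
  forall x : H, `|V x| = `|x|.

Definition uniformly_bounded (R : realType) (H K : normedModType R[i])
    (S : nat -> H -> K) : Prop :=
  exists M : R, forall (n : nat) (x : H), `|S n x| <= (M%:C)%C * `|x|.

Definition power_bounded (R : realType) (K : normedModType R[i]) (T : K -> K) : Prop :=
  uniformly_bounded (fun n : nat => iter n T).

(* Main.v *)
Require Import Defs.
From HB Require Import structures.
From mathcomp Require Import all_boot all_order all_algebra.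
From mathcomp Require Import all_classical all_reals all_analysis.
From mathcomp Require Import complex.
From mathcomp Require Import ring lra.
Import Order.TTheory GRing.Theory Num.Theory.
Import numFieldNormedType.Exports.
Local Open Scope classical_set_scope.
Local Open Scope ring_scope.
Set Implicit Arguments.
Unset Strict Implicit.
Unset Printing Implicit Defensive.
Lemma eqle (T : numDomainType) (x y : T) : x = y -> x <= y.
Proof. by move=> ->. Qed.
Section Lin.
Variables (C : pzRingType) (U W : lmodType C) (f : U -> W).
Hypothesis hf : linear f.

Lemma lin0 : f 0 = 0.
Proof.
have h := hf 1 0 0; rewrite !scale1r addr0 in h.
by apply: (addrI (f 0)); rewrite addr0 -h.
Qed.

Lemma linD u v : f (u + v) = f u + f v.
Proof. by have := hf 1 u v; rewrite !scale1r. Qed.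

Lemma linZ a u : f (a *: u) = a *: f u.
Proof. by have := hf a u 0; rewrite !addr0 lin0 addr0. Qed.

Lemma linN u : f (- u) = - f u.
Proof. by rewrite -scaleN1r linZ scaleN1r. Qed.

Lemma linB u v : f (u - v) = f u - f v.
Proof. by rewrite linD linN. Qed.

Lemma lin_sum I (r : seq I) (P : pred I) (F : I -> U) :
  f (\sum_(i <- r | P i) F i) = \sum_(i <- r | P i) f (F i).
Proof. exact: (big_morph f linD lin0). Qed.
End Lin.

Lemma iter_lin (C : pzRingType) (U : lmodType C) (f : U -> U) n :
  linear f -> linear (iter n f).
Proof.
move=> hf; elim: n => [|n IH] a u v //=.
by rewrite IH hf.
Qed.

Lemma lin_comp (C : pzRingType) (U W Y : lmodType C) (f : U -> W) (g : W -> Y) :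
  linear f -> linear g -> linear (g \o f).
Proof. by move=> hf hg a u v /=; rewrite hf hg. Qed.

Lemma lin_sumf (C : comPzRingType) (U W : lmodType C) I (r : seq I) (p : pred I)
  (F : I -> U -> W) : (forall i, linear (F i)) ->
  linear (fun x => \sum_(i <- r | p i) F i x).
Proof.
move=> hF a u v.
rewrite (eq_bigr _ (fun i _ => hF i a u v)) big_split /=.
by rewrite scaler_sumr.
Qed.

Lemma lin_scalef (C : comPzRingType) (U W : lmodType C) (f : U -> W) c :
  linear f -> linear (fun x => c *: f x).
Proof. by move=> hf a u v; rewrite hf scalerDr !scalerA mulrC. Qed.

Lemma lin_oppf (C : comPzRingType) (U W : lmodType C) (f : U -> W) :
  linear f -> linear (fun x => - f x).
Proof. by move=> hf a u v; rewrite hf opprD scalerN. Qed.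
Section IP.
Variables (R : realType) (H : normedModType R[i]) (ip : H -> H -> R[i]).
Hypothesis hip : is_inner_product ip.

Lemma ip_lin z : linear (fun x => ip x z : R[i]^o).
Proof. by case: hip => h _ _ a x y; rewrite h. Qed.

Lemma ipC x y : ip x y = (ip y x)^*.
Proof. by case: hip. Qed.

Lemma ipxx x : ip x x = `|x| ^+ 2.
Proof. by case: hip. Qed.

Lemma ipDl x y z : ip (x + y) z = ip x z + ip y z.
Proof. exact: (linD (ip_lin z)). Qed.
Lemma ipZl a x z : ip (a *: x) z = a * ip x z.
Proof. exact: (linZ (ip_lin z)). Qed.
Lemma ip0l z : ip 0 z = 0.
Proof. exact: (lin0 (ip_lin z)). Qed.
Lemma ipNl x z : ip (- x) z = - ip x z.
Proof. exact: (linN (ip_lin z)). Qed.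
Lemma ipBl x y z : ip (x - y) z = ip x z - ip y z.
Proof. exact: (linB (ip_lin z)). Qed.

Lemma ipDr x y z : ip z (x + y) = ip z x + ip z y.
Proof. by rewrite ipC ipDl rmorphD (ipC z x) (ipC z y). Qed.
Lemma ipZr a x z : ip z (a *: x) = a^* * ip z x.
Proof. by rewrite ipC ipZl rmorphM (ipC z x). Qed.
Lemma ip0r z : ip z 0 = 0.
Proof. by rewrite ipC ip0l rmorph0. Qed.
Lemma ipNr x z : ip z (- x) = - ip z x.
Proof. by rewrite ipC ipNl rmorphN (ipC z x). Qed.
Lemma ipBr x y z : ip z (x - y) = ip z x - ip z y.
Proof. by rewrite ipDr ipNr. Qed.

Lemma ipxx_real x : (ip x x)^* = ip x x.
Proof. by rewrite -ipC. Qed.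

Lemma ip_eqr u v : (forall y, ip y u = ip y v) -> u = v.
Proof.
move=> h; apply/eqP; rewrite -subr_eq0 -normr_eq0 -sqrf_eq0.
by rewrite -ipxx ipBr h subrr.
Qed.

Lemma ip_eql u v : (forall y, ip u y = ip v y) -> u = v.
Proof. by move=> h; apply: ip_eqr => y; rewrite ipC h -ipC. Qed.

Lemma CS x y : `|ip x y| <= `|x| * `|y|.
Proof.
have [->|y0] := eqVneq y 0; first by rewrite ip0r normr0 normr0 mulr0.
have n0 : ip y y != 0 by rewrite ipxx expf_eq0 /= normr_eq0.
have h := ipxx (x - (ip x y / ip y y) *: y).
rewrite ipBl !ipBr !ipZl !ipZr (ipC y x) in h.
have tc : (ip x y / ip y y)^* = (ip x y)^* / ip y y.
  by rewrite rmorphM fmorphV /= ipxx_real.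
rewrite tc in h.
have e : `|x - (ip x y / ip y y) *: y| ^+ 2 = `|x| ^+ 2 - ip x y * (ip x y)^* / ip y y.
  rewrite -h ipxx; field; exact: n0.
have : ip x y * (ip x y)^* / ip y y <= `|x| ^+ 2.
  by rewrite -subr_ge0 -e exprn_ge0.
rewrite -normCK ipxx ler_pdivrMr ?exprn_gt0 ?normr_gt0 // -exprMn.
by rewrite ler_pXn2r // ?nnegrE ?mulr_ge0.
Qed.
Lemma norm_sub2 u v : `|u - v| ^+ 2 = `|u| ^+ 2 - ip u v - ip v u + `|v| ^+ 2.
Proof. rewrite -!ipxx ipBl !ipBr; ring. Qed.

Lemma norm_ip_bound u y c : `|u| <= c -> `|ip y u| <= `|y| * c.
Proof. by move=> h; apply: le_trans (CS y u) _; apply: ler_wpM2l. Qed.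
End IP.
Section Cplx.
Variable R : realType.

Lemma posC (e : R[i]) : 0 < e -> e = ((complex.Re e)%:C)%C /\ 0 < complex.Re e.
Proof.
case: e => a b; rewrite ltcE /= => /andP[/eqP -> ha].
by split.
Qed.

Lemma natC (n : nat) : ((n%:R : R)%:C)%C = n%:R :> R[i].
Proof. exact: rmorph_nat. Qed.

Lemma archC (e : R[i]) : 0 < e -> exists N : nat, (N.+1%:R : R[i])^-1 < e.
Proof.
move=> /posC [-> he].
have hx : 0 <= (complex.Re e)^-1 by rewrite invr_ge0 ltW.
have hb := archi_boundP hx.
exists (Num.Def.archi_bound (complex.Re e)^-1).
rewrite -natC -fmorphV ltcR.
rewrite -[X in _ < X]invrK ltf_pV2 ?posrE ?invr_gt0 ?ltr0n //.
by apply: (lt_le_trans hb); rewrite ler_nat.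
Qed.

Lemma archC2 (c e : R[i]) : 0 <= c -> 0 < e ->
  exists N : nat, forall n, (N <= n)%N -> c / (n.+1%:R) < e.
Proof.
move=> c0 e0.
have c1 : 0 < c + 1 by rewrite ltr_wpDl.
have [N hN] := archC (divr_gt0 e0 c1).
exists N => n hn.
apply: (le_lt_trans (y := (c+1) * (N.+1%:R)^-1)).
  by apply: ler_pM; rewrite ?invr_ge0 ?ler0n ?lerDl ?ler01 ?lef_pV2 ?posrE ?ltr0n ?ler_nat.
by rewrite mulrC -ltr_pdivlMr.
Qed.

Lemma eq0_small (z c : R[i]) : (forall n : nat, `|z| <= c / n.+1%:R) -> z = 0.
Proof.
move=> h; apply/eqP; rewrite -normr_eq0; apply/negPn/negP => z0.
have zp : 0 < `|z| by rewrite lt_def z0 normr_ge0.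
have c0 : 0 <= c.
  by have := h 0%N; rewrite divr1 => /(le_trans (normr_ge0 _)).
have [N hN] := archC2 c0 zp.
by have := lt_le_trans (hN N (leqnn N)) (h N); rewrite ltxx.
Qed.
End Cplx.
Section Complete.
Variables (R : realType) (K : completeNormedModType R[i]).

Lemma complete_seq (u : nat -> K) (c : R[i]) :
  0 <= c -> (forall n m, (n <= m)%N -> `|u n - u m| <= c / n.+1%:R) ->
  exists x, forall n, `|u n - x| <= c / n.+1%:R.
Proof.
move=> c0 hu.
have cau : cauchy (u @ \oo).
  apply: cauchy_exP => e e0.
  have [N hN] := archC2 c0 e0.
  exists (u N).
  apply: (@filterS _ _ _ [set n | (N <= n)%N]); last exact: nbhs_infty_ge.
  move=> n /= hn; rewrite -ball_normE /=.
  exact: le_lt_trans (hu _ _ hn) (hN _ (leqnn N)).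
have hx : cvg (u @ \oo) by apply: cauchy_cvg.
exists (lim (u @ \oo)) => n.
apply/ler_addgt0Pr => e e0.
have h1 := cvgr_dist_lt _ _ hx _ e0.
have [m [hm1 hm2]] := filter_ex (filterI (nbhs_infty_ge n) (h1 _)).
apply: (le_trans (ler_distD (u m) _ _)).
apply: lerD; first exact: hu.
by rewrite distrC ltW.
Qed.
End Complete.
Section Riesz.
Variables (R : realType) (K : completeNormedModType R[i]) (ip : K -> K -> R[i]).
Hypothesis hip : is_inner_product ip.

Lemma realC (z : R[i]) : 0 <= z -> z = ((complex.Re z)%:C)%C.
Proof. by case: z => a b; rewrite lecE /= => /andP[/eqP -> _]. Qed.

Lemma parallelogram (u v : K) :
  `|u - v| ^+ 2 = 2 * `|u| ^+ 2 + 2 * `|v| ^+ 2 - `|u + v| ^+ 2.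
Proof.
rewrite -!(ipxx hip) !(ipDl hip) ?(ipNl hip) !(ipDr hip) ?(ipNr hip).
ring.
Qed.

Lemma riesz (f : K -> R[i]) (C : R[i]) :
  (forall u v, f (u + v) = f u + f v) -> (forall a u, f (a *: u) = a * f u) ->
  0 <= C -> (forall u, `|f u| <= C * `|u|) -> exists r, forall u, f u = ip u r.
Proof.
move=> fD fZ C0 fC.
have f0 : f 0 = 0 by rewrite -(scale0r 0) fZ mul0r.
have fN u : f (- u) = - f u by rewrite -scaleN1r fZ mulN1r.
have fB u v : f (u - v) = f u - f v by rewrite fD fN.
have [fz|] := pselect (forall u, f u = 0).
  by exists 0 => u; rewrite fz (ip0r hip).
move=> /existsNP [u0 /eqP hu0].
pose x1 := (f u0)^-1 *: u0.
have fx1 : f x1 = 1 by rewrite fZ mulVf.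
pose D : set R := [set d | exists x, f x = 1 /\ d = complex.Re (`|x| ^+ 2)].
have hD : has_inf D.
  split; first by exists (complex.Re (`|x1| ^+ 2)), x1.
  exists 0 => _ [x [_ ->]].
  by have := exprn_ge0 2 (normr_ge0 x); rewrite lecE => /andP[].
pose d := inf D.
have dle x : f x = 1 -> (d%:C)%C <= `|x| ^+ 2.
  move=> fx; rewrite [X in _ <= X]realC ?exprn_ge0 // lecR.
  by apply: (ge_inf hD.2); exists x.
pose ep (n : nat) : R[i] := ((n.+1%:R)^-1) ^+ 2.
have ep0 n : 0 <= ep n by rewrite exprn_ge0 // invr_ge0 ler0n.
have hx n : exists x, f x = 1 /\ `|x| ^+ 2 <= (d%:C)%C + ep n.
  have e0 : (0 : R) < ((n.+1%:R)^-1) ^+ 2 by rewrite exprn_gt0 // invr_gt0 ltr0n.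
  have [_ [x [fx ->]] hlt] := inf_adherent e0 hD.
  exists x; split => //.
  rewrite [X in X <= _]realC ?exprn_ge0 // /ep -natC -fmorphV -rmorphXn -rmorphD.
  by rewrite lecR ltW.
have [xs hxs] := choice hx.
have fxs n : f (xs n) = 1 by case: (hxs n).
have nxs n : `|xs n| ^+ 2 <= (d%:C)%C + ep n by case: (hxs n).
have cau n m : (n <= m)%N -> `|xs n - xs m| <= 2 / n.+1%:R.
  move=> nm.
  have h1 : 4 * (d%:C)%C <= `|xs n + xs m| ^+ 2.
    have := dle (2^-1 *: (xs n + xs m)).
    rewrite fZ fD !fxs mulVf ?pnatr_eq0 // => /(_ erefl).
    rewrite normrZ exprMn normfV normr_nat => h.
    apply: le_trans (ler_wpM2l (ler0n _ 4) h) _.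
    by apply: eqle; field; rewrite ?pnatr_eq0.
  have h2 : `|xs n - xs m| ^+ 2 <= (2 / n.+1%:R) ^+ 2.
    rewrite parallelogram.
    have em : ep m <= ep n.
      rewrite /ep ler_pXn2r ?nnegrE ?invr_ge0 ?ler0n // lef_pV2 ?posrE ?ltr0n //.
      by rewrite ler_nat.
    have : 2 * `|xs n| ^+ 2 + 2 * `|xs m| ^+ 2 - `|xs n + xs m| ^+ 2 <=
           2 * ((d%:C)%C + ep n) + 2 * ((d%:C)%C + ep n) - 4 * (d%:C)%C.
      apply: lerB => //; apply: lerD; rewrite ler_pM2l ?ltr0n //.
      exact: le_trans (nxs m) (lerD (lexx _) em).
    move/le_trans; apply.
    by rewrite /ep; apply: eqle; field; rewrite ?pnatr_eq0.
  by rewrite ler_pXn2r ?nnegrE ?divr_ge0 ?ler0n in h2.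
have [x0 hx0] := complete_seq (ler0n _ 2) cau.
have fx0 : f x0 = 1.
  apply/eqP; rewrite -subr_eq0; apply/eqP.
  apply: (@eq0_small _ _ (C * 2)) => n.
  have -> : f x0 - 1 = f (x0 - xs n) by rewrite fB fxs.
  rewrite -mulrA.
  apply: le_trans (fC _) _; apply: ler_wpM2l => //.
  by rewrite distrC; apply: hx0.
have orth y : f y = 0 -> ip y x0 = 0.
  move=> fy.
  have [->|y0] := eqVneq y 0; first by rewrite (ip0l hip).
  have ny0 : ip y y != 0 by rewrite (ipxx hip) expf_eq0 /= normr_eq0.
  have key n : `|ip y (xs n)| <= `|y| / n.+1%:R.
    pose c := ip y (xs n).
    pose t := - c^* / ip y y.
    have := dle (xs n + t *: y); rewrite fD fZ fy mulr0 addr0 fxs => /(_ erefl).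
    rewrite -(ipxx hip) !(ipDl hip) !(ipDr hip) !(ipZl hip) !(ipZr hip).
    rewrite (ipxx hip (xs n)) -/c (ipC hip (xs n) y) -/c.
    have tc : t^* = - c / ip y y.
      by rewrite /t rmorphM rmorphN fmorphV /= conjCK (ipxx_real hip).
    rewrite tc => h.
    have h3 : c * c^* / ip y y <= ep n.
      have : (d%:C)%C <= `|xs n| ^+ 2 - c * c^* / ip y y.
        apply: (le_trans h); apply: eqle; rewrite /t; field; exact: ny0.
      move=> /le_trans /(_ (lerB (nxs n) (lexx (c * c^* / ip y y)))).
      by rewrite -addrA lerDl subr_ge0.
    move: h3; rewrite -normCK (ipxx hip) ler_pdivrMr ?exprn_gt0 ?normr_gt0 //.
    rewrite /ep -exprMn ler_pXn2r ?nnegrE ?mulr_ge0 ?invr_ge0 ?ler0n //.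
    by rewrite mulrC.
  apply: (@eq0_small _ _ (3 * `|y|)) => n.
  rewrite -[ip y x0](subrK (ip y (xs n))) -(ipBr hip).
  apply: le_trans (ler_normD _ _) _.
  apply: le_trans (lerD (CS hip _ _) (key n)) _.
  have := hx0 n; rewrite distrC => h.
  apply: le_trans (lerD (ler_wpM2l (normr_ge0 y) h) (lexx _)) _.
  by apply: eqle; field; rewrite ?pnatr_eq0.
have x00 : ip x0 x0 != 0.
  rewrite (ipxx hip) expf_eq0 /= normr_eq0.
  by apply/eqP => h; move: fx0; rewrite h f0 => /eqP; rewrite eq_sym oner_eq0.
exists ((ip x0 x0)^-1 *: x0) => w.
have := orth (w - f w *: x0); rewrite fB fZ fx0 mulr1 subrr => /(_ erefl).
rewrite (ipBl hip) (ipZl hip) => /eqP; rewrite subr_eq0 => /eqP hw.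
rewrite (ipZr hip) hw fmorphV /= (ipxx_real hip).
by rewrite mulrC mulrK.
Qed.
End Riesz.
Lemma ultra_fmap (T U : Type) (f : T -> U) (F : set_system T) :
  UltraFilter F -> UltraFilter (f @ F).
Proof.
move=> FU; split; first exact: fmap_proper_filter.
move=> G' PG sFG; rewrite eqEsubset; split => // A GA.
have [//|FnA] := in_ultra_setVsetC (f @^-1` A) FU.
have GnA : G' (~` A) by apply: sFG.
exfalso; apply: (filter_not_empty G'); rewrite -(setICr A); exact: filterI.
Qed.

Lemma normC_ReIm (R : realType) (z : R[i]) :
  `|z| <= ((`|complex.Re z| + `|complex.Im z|)%:C)%C.
Proof.
rewrite normc_def lecR -[X in _ <= X]ger0_norm ?addr_ge0 // -sqrtr_sqr.
rewrite ler_wsqrtr // sqrrD !real_normK ?num_real //.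
rewrite -addrA lerD2l lerDr mulrn_wge0 // mulr_ge0.
Qed.

Lemma Re_le_norm (R : realType) (z : R[i]) : `|complex.Re z| <= complex.Re `|z|.
Proof.
rewrite normc_def /= -sqrtr_sqr ler_wsqrtr // lerDl sqr_ge0 //.
Qed.

Lemma Im_le_norm (R : realType) (z : R[i]) : `|complex.Im z| <= complex.Re `|z|.
Proof.
rewrite normc_def /= -sqrtr_sqr ler_wsqrtr // lerDr sqr_ge0 //.
Qed.

Section Ultra.
Variables (R : realType) (G : set_system nat).
Hypothesis GU : UltraFilter G.
Hypothesis Ginf : nbhs \oo `<=` G.
Local Notation C := (R[i] : numFieldType).

Lemma ultra_cvgR (u : nat -> R) (M : R) :
  (forall n, `|u n| <= M) -> exists l : R, u @ G --> l.
Proof.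
move=> hM.
have := @segment_compact R (-M) M; rewrite compact_ultra => /(_ (u @ G) (ultra_fmap u GU)).
case.
  apply: (@filterE _ G) => n /=; rewrite in_itv /= -ler_norml; exact: hM.
by move=> l [_ hl]; exists l.
Qed.

Lemma ultra_cvgC (a : nat -> C) (M : C) :
  (forall n, `|a n| <= M) -> exists l : C, a @ G --> l.
Proof.
move=> hM.
have hRe n : `|complex.Re (a n)| <= complex.Re M.
  apply: le_trans (Re_le_norm _) _.
  by have := hM n; rewrite lecE => /andP[].
have hIm n : `|complex.Im (a n)| <= complex.Re M.
  apply: le_trans (Im_le_norm _) _.
  by have := hM n; rewrite lecE => /andP[].
have [r hr] := ultra_cvgR hRe.
have [s hs] := ultra_cvgR hIm.
exists (Complex r s).
apply/cvgrPdist_lt => e /posC [-> he].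
have e2 : 0 < complex.Re e / 2 by rewrite divr_gt0.
have h1 := cvgr_dist_lt _ _ hr _ e2.
have h2 := cvgr_dist_lt _ _ hs _ e2.
apply: filterS (filterI (h1 _) (h2 _)) => n /= [hn1 hn2].
apply: le_lt_trans (normC_ReIm _) _.
rewrite ltcR.
case: (a n) hn1 hn2 => x y /= hn1 hn2.
by rewrite (splitr (complex.Re e)); apply: ltrD.
Qed.

Definition LC (a : nat -> C) : C := lim (a @ G).

Lemma LC_limG a l : a @ G --> l -> LC a = l.
Proof. by move=> h; apply: (cvg_lim (@norm_hausdorff _ _)). Qed.

Lemma LC_lim a l : a @ \oo --> l -> LC a = l.
Proof. by move=> h; apply: LC_limG => A /h; apply: Ginf. Qed.

Definition bnd (a : nat -> C) := exists M, forall n, `|a n| <= M.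

Lemma LC_cvg a : bnd a -> a @ G --> LC a.
Proof. by move=> [M hM]; have [l hl] := ultra_cvgC hM; rewrite (LC_limG hl). Qed.

Lemma LC_cst c : LC (fun _ => c) = c.
Proof. by apply: LC_limG; apply: cvg_cst. Qed.

Lemma LCD a b : bnd a -> bnd b -> LC (fun n => a n + b n) = LC a + LC b.
Proof.
move=> ha hb; apply: LC_limG.
exact: (cvgD (LC_cvg ha) (LC_cvg hb)).
Qed.

Lemma LCM c a : bnd a -> LC (fun n => c * a n) = c * LC a.
Proof.
move=> ha; apply: LC_limG.
exact: (cvgM (cvg_cst c) (LC_cvg ha)).
Qed.

Lemma bnd_add a b : bnd a -> bnd b -> bnd (fun n => a n + b n).
Proof.
move=> [Ma ha] [Mb hb]; exists (Ma + Mb) => n.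
by apply: le_trans (ler_normD _ _) _; apply: lerD.
Qed.

Lemma bnd_opp a : bnd a -> bnd (fun n => - a n).
Proof. by move=> [M h]; exists M => n; rewrite normrN. Qed.

Lemma bnd_mul c a : bnd a -> bnd (fun n => c * a n).
Proof.
by move=> [M h]; exists (`|c| * M) => n; rewrite normrM; apply: ler_wpM2l.
Qed.

Lemma bnd_cst c : bnd (fun _ => c).
Proof. by exists `|c|. Qed.

Lemma cvg0_inv (a : nat -> C) c : (forall N, `|a N| <= c / N.+1%:R) -> a @ \oo --> 0.
Proof.
move=> h.
have c0 : 0 <= c by have := h 0%N; rewrite divr1 => /(le_trans (normr_ge0 _)).
apply/cvgrPdist_lt => e e0.
have [N hN] := archC2 c0 e0.
apply: (@filterS _ _ _ [set n | (N <= n)%N]); last exact: nbhs_infty_ge.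
move=> n /= hn.
by rewrite sub0r normrN; apply: le_lt_trans (h n) (hN n hn).
Qed.

Lemma LC_le a e : bnd a -> (forall n, `|a n| <= e) -> `|LC a| <= e.
Proof.
move=> ha he; apply/ler_addgt0Pr => eps eps0.
have h := cvgr_dist_lt _ _ (LC_cvg ha) _ eps0.
have [n hn] := filter_ex (h _).
rewrite -[LC a](subrK (a n)) addrC.
apply: le_trans (ler_normD _ _) _.
by apply: lerD; [apply: he | apply: ltW].
Qed.
End Ultra.
Lemma bop_bound (R : realType) (H K : normedModType R[i]) (f : H -> K) :
  bounded_op f -> exists c : R[i], 0 <= c /\ forall x, `|f x| <= c * `|x|.
Proof.
move=> [hl hc].
pose fL : {linear H -> K} := HB.pack f (GRing.isLinear.Build _ _ _ _ f hl).
have := (linear_boundedP fL).1 (@continuous_linear_bounded _ _ _ 0 fL (hc 0)).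
move=> [M [Mreal hM]].
exists (`|M| + 1); split; first by rewrite addr_ge0.
apply: hM.
by rewrite (le_lt_trans (real_ler_norm Mreal)) // ltrDl ltr01.
Qed.

Lemma bound_cont (R : realType) (H K : normedModType R[i]) (f : H -> K) (c : R[i]) :
  linear f -> 0 <= c -> (forall x, `|f x| <= c * `|x|) -> continuous f.
Proof.
move=> hl c0 hc.
pose fL : {linear H -> K} := HB.pack f (GRing.isLinear.Build _ _ _ _ f hl).
apply: (@bounded_linear_continuous _ _ _ fL).
apply/linear_boundedP.
exists c; split; first exact: ger0_real.
move=> r cr x; apply: le_trans (hc x) _.
by apply: ler_wpM2r => //; apply: ltW.
Qed.
Section Main.
Variables (R : realType) (H K : completeNormedModType R[i]).
Variables (ipH : H -> H -> R[i]) (ipK : K -> K -> R[i]).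
Hypotheses (hipH : is_inner_product ipH) (hipK : is_inner_product ipK).
Variables (V : H -> H) (Vs : H -> H) (T : K -> K) (X : H -> K).
Hypotheses (hV : bounded_op V) (hViso : is_isometry V) (hVs : is_adjoint ipH ipH V Vs).
Hypotheses (hT : bounded_op T) (hTpb : power_bounded T) (hX : bounded_op X).

Let VL : linear V := hV.1.
Let TL : linear T := hT.1.
Let XL : linear X := hX.1.

Lemma VsL : linear Vs.
Proof.
move=> a u v; apply: (ip_eqr hipH) => y.
rewrite -hVs (ipDr hipH) (ipZr hipH) !hVs.
by rewrite -(ipZr hipH) -(ipDr hipH).
Qed.

Lemma Vs_contr u : `|Vs u| <= `|u|.
Proof.
have h := norm_sub2 hipH (V (Vs u)) u.
rewrite hViso hVs (ipC hipH u) hVs (ipxx hipH) in h.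
have : `|Vs u| ^+ 2 <= `|u| ^+ 2.
  rewrite -subr_ge0; apply: le_trans (exprn_ge0 2 (normr_ge0 (V (Vs u) - u))) _.
  rewrite h; apply: eqle.
  have -> : (`|Vs u| ^+ 2)^* = `|Vs u| ^+ 2 by rewrite -(ipxx hipH) (ipxx_real hipH).
  ring.
by rewrite ler_pXn2r ?nnegrE.
Qed.

Lemma VsV y : Vs (V y) = y.
Proof.
apply/eqP; rewrite -subr_eq0 -normr_eq0 -sqrf_eq0 eq_le exprn_ge0 ?normr_ge0 // andbT.
rewrite (norm_sub2 hipH) (ipC hipH) -hVs (ipxx hipH) hViso.
have -> : (`|y| ^+ 2)^* = `|y| ^+ 2 by rewrite -(ipxx hipH) (ipxx_real hipH).
have := Vs_contr (V y); rewrite hViso => h.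
have h2 : `|Vs (V y)| ^+ 2 <= `|y| ^+ 2 by rewrite ler_pXn2r ?nnegrE.
rewrite [X in X <= 0](_ : _ = `|Vs (V y)| ^+ 2 - `|y| ^+ 2); last by ring.
by rewrite subr_le0.
Qed.

Lemma iterVs_contr n u : `|iter n Vs u| <= `|u|.
Proof.
elim: n => [|n IH] //=; exact: le_trans (Vs_contr _) IH.
Qed.

Lemma pb_bound : exists c : R[i], 0 <= c /\ forall n y, `|iter n T y| <= c * `|y|.
Proof.
case: hTpb => M hM; exists `|(M%:C)%C|; split => // n y.
apply: le_trans (hM n y) _; apply: ler_wpM2r => //.
by apply: real_ler_norm; apply/complex_realP; exists M.
Qed.

Lemma forward (Z : H -> K) : bounded_op Z -> (forall x, X x = T (Z x) - Z (V x)) ->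
  (forall x, Z (x - V (Vs x)) = 0) ->
  uniformly_bounded
    (fun (n : nat) (x : H) =>
       \sum_(0 <= j < n.+1) iter j T (X (iter j.+1 Vs x))).
Proof.
move=> hZ hXZ hZV.
have ZL : linear Z := hZ.1.
have ZVVs u : Z (V (Vs u)) = Z u.
  by have := hZV u; rewrite (linB ZL) => /eqP; rewrite subr_eq0 => /eqP ->.
have [cZ [cZ0 hcZ]] := bop_bound hZ.
have [cT [cT0 hcT]] := pb_bound.
have key x j : iter j T (X (iter j.+1 Vs x)) =
    iter j.+1 T (Z (iter j.+1 Vs x)) - iter j T (Z (iter j Vs x)).
  rewrite hXZ (linB (iter_lin j TL)) iterS ZVVs.
  by rewrite iterSr.
pose c := cT * cZ + cZ.
have c0 : 0 <= c by rewrite addr_ge0 // mulr_ge0.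
exists (complex.Re c) => n x.
rewrite -realC // (eq_bigr _ (fun j _ => key x j)).
rewrite (telescope_sumr (fun j => iter j T (Z (iter j Vs x)))) //.
apply: le_trans (ler_normD _ _) _; rewrite normrN.
rewrite /c mulrDl; apply: lerD.
  apply: le_trans (hcT _ _) _; rewrite -mulrA; apply: ler_wpM2l => //.
  apply: le_trans (hcZ _) _; apply: ler_wpM2l => //; exact: iterVs_contr.
exact: hcZ.
Qed.
Definition Pn (n : nat) (x : H) : K := \sum_(0 <= j < n) iter j T (X (iter j.+1 Vs x)).
Definition Qn (n : nat) (x : H) : K := - Pn n x.
Definition Yn (N : nat) (x : H) : K := (N.+1%:R)^-1 *: \sum_(0 <= n < N.+1) Qn n x.

Lemma Pn_lin n : linear (Pn n).
Proof.
exact: (@lin_sumf _ _ _ _ (index_iota 0 n) xpredT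
   (fun j x => iter j T (X (iter j.+1 Vs x)))
   (fun j => lin_comp (lin_comp (iter_lin j.+1 VsL) XL) (iter_lin j TL))).
Qed.

Lemma Qn_lin n : linear (Qn n).
Proof. exact: lin_oppf (Pn_lin n). Qed.

Lemma Yn_lin N : linear (Yn N).
Proof.
exact: (lin_scalef _ (@lin_sumf _ _ _ _ (index_iota 0 N.+1) xpredT
   (fun n x => Qn n x) (fun n => Qn_lin n))).
Qed.

Lemma Qn_rec n x : Qn n.+1 x = T (Qn n (Vs x)) - X (Vs x).
Proof.
rewrite /Qn /Pn big_nat_recl //= (linN TL) (lin_sum TL) opprD addrC.
congr (- _ - _); apply: eq_bigr => j _.
by rewrite -[Vs (iter j Vs x)]iterS iterSr.
Qed.

Lemma Yn_fix N x :
  Yn N x - (T (Yn N (Vs x)) - X (Vs x)) = - ((N.+1%:R)^-1 *: Qn N.+1 x).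
Proof.
rewrite /Yn (linZ TL) (lin_sum TL).
have e : \sum_(0 <= n < N.+1) T (Qn n (Vs x)) =
    \sum_(0 <= n < N.+1) Qn n.+1 x + (N.+1%:R) *: X (Vs x).
  rewrite (eq_bigr (fun n => Qn n.+1 x + X (Vs x))); last first.
    by move=> n _; rewrite Qn_rec subrK.
  by rewrite big_split /= sumr_const_nat subn0 scaler_nat.
rewrite e scalerDr scalerA mulVf ?pnatr_eq0 // scale1r addrK.
rewrite -scalerBr -scalerN; congr (_ *: _).
rewrite -opprB; congr (- _).
rewrite -sumrB (telescope_sumr (fun n => Qn n x)) //.
have -> : Qn 0 x = 0 by rewrite /Qn /Pn big_geq // oppr0.
by rewrite subr0.
Qed.
Lemma backward :
  uniformly_bounded
    (fun (n : nat) (x : H) =>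
       \sum_(0 <= j < n.+1) iter j T (X (iter j.+1 Vs x))) ->
  exists Z : H -> K,
     [/\ bounded_op Z,
         forall x : H, X x = T (Z x) - Z (V x) &
         forall x : H, Z (x - V (Vs x)) = 0].
Proof.
case=> M hM.
pose MS := `|(M%:C)%C|.
have MS0 : 0 <= MS by apply: normr_ge0.
have hP n x : `|Pn n x| <= MS * `|x|.
  case: n => [|n]; first by rewrite /Pn big_geq // normr0 mulr_ge0.
  apply: le_trans (hM n x) _; apply: ler_wpM2r => //.
  by apply: real_ler_norm; apply/complex_realP; exists M.
have hQ n x : `|Qn n x| <= MS * `|x| by rewrite normrN.
have hY N x : `|Yn N x| <= MS * `|x|.
  rewrite /Yn normrZ normfV normr_nat ler_pdivrMl ?ltr0n //.
  apply: le_trans (ler_norm_sum _ _ _) _.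
  apply: le_trans (ler_sum _ (fun n _ => hQ n x)) _.
  by rewrite sumr_const_nat subn0 mulr_natl.
have [G [GU sG]] := @ultraFilterLemma nat (nbhs \oo) _.
have bndip y (w : nat -> K) c : (forall N, `|w N| <= c) -> bnd (fun N => ipK y (w N)).
  by move=> h; exists (`|y| * c) => N; by apply: (norm_ip_bound hipK); apply: h.
have hZ x : exists z, forall y, LC G (fun N => ipK y (Yn N x)) = ipK y z.
  apply: (riesz hipK (C := MS * `|x|)).
  - move=> u v.
    have -> : (fun N => ipK (u + v) (Yn N x)) =
        (fun N => ipK u (Yn N x) + ipK v (Yn N x)).
      by apply: funext => N; rewrite (ipDl hipK).
    by rewrite (LCD GU) //; apply: bndip (fun N => hY N x).
  - move=> a u.
    have -> : (fun N => ipK (a *: u) (Yn N x)) = (fun N => a * ipK u (Yn N x)).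
      by apply: funext => N; rewrite (ipZl hipK).
    by rewrite (LCM GU) //; apply: bndip (fun N => hY N x).
  - by rewrite mulr_ge0.
  - move=> y; apply: (LC_le GU); first exact: bndip (fun N => hY N x).
    by move=> N; rewrite mulrC; apply: (norm_ip_bound hipK); apply: hY.
have [Z hZ'] := choice hZ.
have ZL : linear Z.
  move=> a u v; apply: (ip_eqr hipK) => y.
  rewrite -hZ' (ipDr hipK) (ipZr hipK) -!hZ'.
  have -> : (fun N => ipK y (Yn N (a *: u + v))) =
      (fun N => a^* * ipK y (Yn N u) + ipK y (Yn N v)).
    by apply: funext => N; rewrite (Yn_lin N) (ipDr hipK) (ipZr hipK).
  rewrite (LCD GU); last 2 first.
  - by apply: bnd_mul; apply: bndip (fun N => hY N u).
  - exact: bndip (fun N => hY N v).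
  by rewrite (LCM GU) //; apply: bndip (fun N => hY N u).
have hZb x : `|Z x| <= MS * `|x|.
  have h := hZ' x (Z x); rewrite (ipxx hipK) in h.
  have h2 : `|Z x| ^+ 2 <= `|Z x| * (MS * `|x|).
    have -> : `|Z x| ^+ 2 = `|LC G (fun N => ipK (Z x) (Yn N x))|.
      by rewrite h ger0_norm // exprn_ge0.
    apply: (LC_le GU); first exact: bndip (fun N => hY N x).
    by move=> N; apply: (norm_ip_bound hipK); apply: hY.
  have [->|z0] := eqVneq (Z x) 0; first by rewrite normr0 mulr_ge0.
  by rewrite expr2 ler_pM2l ?normr_gt0 in h2.
have Zcont : continuous Z := bound_cont ZL MS0 hZb.
have [cT [cT0 hcT]] := bop_bound hT.
have hTs y : exists r, forall w, ipK (T w) y = ipK w r.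
  apply: (riesz hipK (C := cT * `|y|)).
  - by move=> u v; rewrite (linD TL) (ipDl hipK).
  - by move=> a u; rewrite (linZ TL) (ipZl hipK).
  - by rewrite mulr_ge0.
  - move=> w; apply: le_trans (CS hipK _ _) _.
    rewrite mulrAC; apply: ler_wpM2r => //.
have [Ts hTs'] := choice hTs.
have hfix x : Z x = T (Z (Vs x)) - X (Vs x).
  apply: (ip_eqr hipK) => y.
  pose u := Vs x.
  have e1 : ipK y (T (Z u)) = LC G (fun N => ipK y (T (Yn N u))).
    rewrite (ipC hipK) hTs' -(ipC hipK) -hZ'.
    congr (LC G _); apply: funext => N.
    by rewrite (ipC hipK (Ts y)) -hTs' -(ipC hipK).
  rewrite -/u -hZ' (ipBr hipK) e1.
  pose b N := ipK y (T (Yn N u)) - ipK y (X u).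
  have -> : (fun N => ipK y (Yn N x)) = (fun N => b N + (ipK y (Yn N x) - b N)).
    by apply: funext => N; rewrite addrC subrK.
  have bb : bnd b.
    apply: bnd_add; last exact: bnd_cst.
    apply: (bndip y _ (cT * (MS * `|u|))) => N.
    by apply: le_trans (hcT _) _; apply: ler_wpM2l.
  rewrite (LCD GU) //; last first.
    apply: bnd_add; [exact: bndip (fun N => hY N x) | exact: bnd_opp].
  have d0 : LC G (fun N => ipK y (Yn N x) - b N) = 0.
    apply: (LC_lim GU sG).
    apply: (cvg0_inv (c := `|y| * (MS * `|x|))) => N.
    rewrite /b /u -!(ipBr hipK) Yn_fix (ipNr hipK) normrN (ipZr hipK) normrM.
    rewrite norm_conjC normfV normr_nat.
    rewrite mulrC; apply: ler_wpM2r; first by rewrite invr_ge0 ler0n.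
    apply: (norm_ip_bound hipK); exact: hQ.
  rewrite d0 addr0 (LCD GU) //; first by rewrite LC_cst.
    apply: (bndip y _ (cT * (MS * `|u|))) => N.
    by apply: le_trans (hcT _) _; apply: ler_wpM2l.
  exact: bnd_cst.
exists Z; split.
- by split.
- by move=> x; rewrite (hfix (V x)) VsV opprB addrC subrK.
- by move=> x; rewrite (linB ZL) (hfix (V (Vs x))) VsV -hfix subrr.
Qed.
End Main.

Theorem theorem2p1 (R : realType)
  (H K : completeNormedModType R[i])
  (ipH : H -> H -> R[i]) (ipK : K -> K -> R[i])
  (hipH : is_inner_product ipH) (hipK : is_inner_product ipK)
  (V : H -> H) (Vs : H -> H) (T : K -> K) (X : H -> K)
  (hV : bounded_op V) (hViso : is_isometry V) (hVs : is_adjoint ipH ipH V Vs)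
  (hT : bounded_op T) (hTpb : power_bounded T)
  (hX : bounded_op X) :
  (exists Z : H -> K,
     [/\ bounded_op Z,
         forall x : H, X x = T (Z x) - Z (V x) &
         forall x : H, Z (x - V (Vs x)) = 0])
  <->
  uniformly_bounded
    (fun (n : nat) (x : H) =>
       \sum_(0 <= j < n.+1) iter j T (X (iter j.+1 Vs x))).
Proof.
split.
- case=> Z [h1 h2 h3].
  exact: (forward hipH hViso hVs hT hTpb h1 h2 h3).
- move=> h.
  exact: (backward hipH hipK hViso hVs hT hX h).
Qed.
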